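(* Let $n\ge 3$, let $c^1,\dots,c^n$ be pairwise distinct constants, and let $u(x^1,\dots,x^n)$ be smooth with all first derivatives $u_i$ nowhere zero. Suppose that for all pairwise distinct $i,j,k$, $$(c^i-c^j)u_ku_{ij}+(c^k-c^i)u_ju_{ik}+(c^j-c^k)u_iu_{jk}=0\quad\text{and}\quad u_{ijk}=\tfrac12\Big(\frac{u_{ij}u_{ik}}{u_i}+\frac{u_{ij}u_{jk}}{u_j}+\frac{u_{ik}u_{jk}}{u_k}\Big).$$ Then for all $i\ne j$ the planar equation $$\Big(\frac{u_{ij}^2}{u_i^2u_j}\Big)_i+\Big(\frac{u_{ij}^2}{u_iu_j^2}\Big)_j+\Big(\frac{2u_{ij}}{u_iu_j}\Big)_{ij}=0$$ holds, where outer subscripts denote partial derivatives with respect to $x^i$, $x^j$.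
   Context: Subscripts on $u$ denote partial derivatives with respect to the independent variables, e.g. $u_{ij}=\partial^2u/\partial x^i\partial x^j$. The planar equation is the first group of multiform Euler-Lagrange equations of the Lagrangian 2-form $\mathcal{L}=\sum_{i<j}(c^i-c^j)\frac{u_{ij}^2}{u_iu_j}\,\mathrm{d}x^i\wedge\mathrm{d}x^j$. *)

(* Defs.v *)
From HB Require Import structures.
From mathcomp Require Import all_boot all_order all_algebra.
From mathcomp Require Import all_classical all_reals all_analysis.
Set Implicit Arguments. Unset Strict Implicit. Unset Printing Implicit Defensive.
Import Order.TTheory GRing.Theory Num.Theory.
Import numFieldNormedType.Exports.
Local Open Scope ring_scope.

Definition ebasis {R : realType} {n : nat} (i : 'I_n) : 'rV[R]_n :=
  delta_mx 0 i.

Definition pd {R : realType} {n : nat} (i : 'I_n) (f : 'rV[R]_n -> R)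
  : 'rV[R]_n -> R := fun x => 'D_(ebasis i) f x.

Fixpoint pds {R : realType} {n : nat} (s : seq 'I_n) (f : 'rV[R]_n -> R)
  : 'rV[R]_n -> R :=
  match s with
  | [::] => f
  | i :: s' => pd i (pds s' f)
  end.

Definition smooth {R : realType} {n : nat} (f : 'rV[R]_n -> R) : Prop :=
  forall (s : seq 'I_n) (x : 'rV[R]_n), differentiable (pds s f) x.

(* Main.v *)
Require Import Defs.
From HB Require Import structures.
From mathcomp Require Import all_boot all_order all_algebra.
From mathcomp Require Import all_classical all_reals all_analysis.
From mathcomp Require Import ring lra.
Import Order.TTheory GRing.Theory Num.Theory.
Import numFieldNormedType.Exports.
Local Open Scope ring_scope.
Set Implicit Arguments. Unset Strict Implicit. Unset Printing Implicit Defensive.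
From Stdlib Require Import Lia.
From mathcomp Require Import zify.

Section Aux.
Variables (R : realType) (V : normedModType R).
Implicit Types (f g : V -> R) (x v : V).

Lemma derive_line f (c e : V) (t : R) :
  derivable f (c + t *: e) e ->
  is_derive t (1:R) (fun s : R => f (c + s *: e)) ('D_e f (c + t *: e)).
Proof.
move=> df.
have E : (fun h : R => h^-1 *: (((fun s : R => f (c + s *: e)) \o shift t) (h *: 1) - f (c + t *: e)))
  = (fun h : R => h^-1 *: ((f \o shift (c + t *: e)) (h *: e) - f (c + t *: e))).
  apply/funext => h /=; congr (_ *: (f _ - _)).
  by rewrite /shift scaler1 scalerDl addrCA addrA.
split; first by rewrite /derivable E.
by rewrite /derive E.
Qed.

Lemma isdA f x v : differentiable f x -> is_derive x v f ('D_v f x).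
Proof. by move=> /(@diff_derivable _ _ _ _ _ v) /derivableP. Qed.
Lemma isdC (c : R) x v : is_derive x v (fun _ => c) 0.
Proof. exact: is_derive_cst. Qed.
Lemma isdD f g x v df dg : is_derive x v f df -> is_derive x v g dg ->
  is_derive x v (fun y => f y + g y) (df + dg).
Proof. move=> H1 H2; exact: is_deriveD. Qed.
Lemma isdB f g x v df dg : is_derive x v f df -> is_derive x v g dg ->
  is_derive x v (fun y => f y - g y) (df - dg).
Proof. move=> H1 H2; exact: is_deriveB. Qed.
Lemma isdM f g x v df dg : is_derive x v f df -> is_derive x v g dg ->
  is_derive x v (fun y => f y * g y) (df * g x + f x * dg).
Proof.
move=> H1 H2; refine (is_derive_eq (is_deriveM H1 H2) _).
by rewrite /= addrC [df * _]mulrC.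
Qed.
Lemma isdV f x v df : f x != 0 -> is_derive x v f df ->
  is_derive x v (fun y => (f y)^-1) (- df / (f x ^+ 2)).
Proof.
move=> fx0 [Hd Hv]; split.
  by apply: derivableV.
rewrite deriveV // Hv /=; change (- f x ^- 2 * df = - df / f x ^+ 2).
by rewrite mulNr mulNr mulrC.
Qed.
Lemma isdX2 f x v df : is_derive x v f df ->
  is_derive x v (fun y => f y ^+ 2) (2 * f x * df).
Proof.
move=> H; have := isdM H H.
have -> : (fun y => f y * f y) = (fun y => f y ^+ 2) by apply/funext => y; rewrite expr2.
move=> H2; refine (is_derive_eq H2 _).
by rewrite /=; ring.
Qed.

End Aux.
Section Aux2.
Variables (R : realType) (V : normedModType R).
Implicit Types (f g : V -> R) (x v : V).
Lemma mvt0 (F dF : R -> R) (h : R) : 0 < h -> (forall s : R, is_derive s (1 : R) F (dF s)) ->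
  exists2 s, s \in `]0, h[ & F h - F 0 = dF s * h.
Proof.
move=> h0 HF.
have [|s sI E] := MVT h0 (fun s _ => HF s).
  apply: continuous_subspaceT => t; apply: differentiable_continuous.
  by apply/derivable1_diffP; case: (HF t).
by exists s => //; rewrite E subr0.
Qed.

Lemma mvt2 f x ea eb (h : R) : 0 < h -> (forall y, differentiable f y) ->
  (forall y, differentiable ('D_ea f) y) ->
  exists s, exists t, [/\ s \in `]0, h[, t \in `]0, h[ &
    f (x + h *: eb + h *: ea) - f (x + h *: ea) - f (x + h *: eb) + f x
    = h * h * 'D_eb ('D_ea f) (x + s *: ea + t *: eb)].
Proof.
move=> h0 df dDf.
have HG (s : R) : is_derive s (1:R) (fun s => f (x + h *: eb + s *: ea) - f (x + s *: ea))
    ('D_ea f (x + h *: eb + s *: ea) - 'D_ea f (x + s *: ea)).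
  by apply: isdB; apply: derive_line; apply: diff_derivable.
have [s sI Es] := mvt0 h0 HG.
have HK (t : R) : is_derive t (1:R) (fun t => 'D_ea f (x + s *: ea + t *: eb))
    ('D_eb ('D_ea f) (x + s *: ea + t *: eb)).
  by apply: derive_line; apply: diff_derivable.
have [t tI Et] := mvt0 h0 HK.
exists s, t; split => //.
move: Es Et; rewrite !scale0r !addr0 => Es.
rewrite (_ : f (x + h *: eb + h *: ea) - f (x + h *: ea) - f (x + h *: eb) + f x
  = f (x + h *: eb + h *: ea) - f (x + h *: ea) - (f (x + h *: eb) - f x)); last by ring.
rewrite Es.
rewrite [x + h *: eb + s *: ea]addrAC => ->.
by rewrite -mulrA mulrC.
Qed.

Lemma norm_small (x ea eb : V) (s t h : R) : s \in `]0, h[ -> t \in `]0, h[ ->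
  `|x - (x + s *: ea + t *: eb)| < h * (`|ea| + `|eb| + 1).
Proof.
rewrite !in_itv /= => /andP[s0 sh] /andP[t0 th].
have -> : x - (x + s *: ea + t *: eb) = - (s *: ea + t *: eb).
  by rewrite -addrA opprD addrA subrr add0r.
rewrite normrN (le_lt_trans (ler_normD _ _)) // !normrZ !gtr0_norm //.
have := normr_ge0 ea; have := normr_ge0 eb; nra.
Qed.

Lemma eq_eps (a b : R) : (forall e : R, 0 < e -> `|a - b| < e + e) -> a = b.
Proof.
move=> H; have := normr_ge0 (a - b); rewrite le_eqVlt => /orP[/eqP E|dp].
  by apply/eqP; rewrite -subr_eq0 -normr_eq0 -E.
have two : (0:R) < 2 by rewrite ltr0n.
by have := H _ (divr_gt0 dp two); rewrite -(splitr `|a - b|) ltxx.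
Qed.

Lemma tri (a b c d e : R) : `|a - c| < e -> `|b - d| < e -> c = d -> `|a - b| < e + e.
Proof.
move=> H1 H2 E; have -> : a - b = (a - c) - (b - d) by rewrite E opprB addrA subrK.
by rewrite (le_lt_trans (ler_normB _ _)) // ltrD.
Qed.

Lemma clairaut f x ea eb : (forall y, differentiable f y) ->
  (forall y, differentiable ('D_ea f) y) -> (forall y, differentiable ('D_eb f) y) ->
  (forall y, differentiable ('D_eb ('D_ea f)) y) ->
  (forall y, differentiable ('D_ea ('D_eb f)) y) ->
  'D_eb ('D_ea f) x = 'D_ea ('D_eb f) x.
Proof.
move=> df dfa dfb dFab dFba.
set F := 'D_eb ('D_ea f); set G := 'D_ea ('D_eb f).
apply: eq_eps => e e0.
have NF := (@cvgrPdist_lt _ _ _ (nbhs x) _ F (F x)).1 (differentiable_continuous (dFab x)) e e0.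
have NG := (@cvgrPdist_lt _ _ _ (nbhs x) _ G (G x)).1 (differentiable_continuous (dFba x)) e e0.
have FF : Filter (nbhs x) by exact: _.
have N := @filterI _ (nbhs x) FF _ _ (NF FF) (NG FF).
have [d /= d0 Hd] := (nbhs_ballP x _).1 N.
set M := `|ea| + `|eb| + 1.
have M0 : 0 < M by rewrite /M; have := normr_ge0 ea; have := normr_ge0 eb; lra.
set h := d / M.
have h0 : 0 < h by rewrite divr_gt0.
have hM : h * M = d by rewrite /h divfK // gt_eqF.
have [s [t [sI tI E1]]] := mvt2 (ea:=ea) x eb h0 df dfa.
have [s' [t' [sI' tI' E2]]] := mvt2 (ea:=eb) x ea h0 df dfb.
have EFG : F (x + s *: ea + t *: eb) = G (x + s' *: eb + t' *: ea).
  have hh : h * h != 0 by rewrite mulf_neq0 // gt_eqF.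
  apply: (mulfI hh); rewrite /F /G -E1 -E2 [x + h *: ea + h *: eb]addrAC.
  by rewrite [_ - f (x + h *: ea) - _]addrAC.
have B1 : ball x d (x + s *: ea + t *: eb).
  by rewrite -ball_normE /ball_ -hM /M; exact: norm_small.
have B2 : ball x d (x + s' *: eb + t' *: ea).
  by rewrite -ball_normE /ball_ -hM /M [`|ea| + `|eb|]addrC; exact: norm_small.
have [HF _] := Hd _ B1.
have [_ HG] := Hd _ B2.
exact: (tri HF HG EFG).
Qed.
End Aux2.

Lemma lin_solve (R : fieldType) (a X b : R) : a != 0 -> b + a * X = 0 -> X = - b / a.
Proof. move=> a0 H; apply: (mulfI a0); rewrite mulrCA divff // mulr1. by rewrite -(addKr b (a*X)) H addr0. Qed.

Lemma alg (R : realFieldType) (ci cj ck ui uj uk uii ujj uij uik ujk uiij uijj uiik ujjk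
   uijk uiijk uijjk uiijj : R) :
  ui != 0 -> uj != 0 -> uk != 0 -> ci - cj != 0 -> ck - ci != 0 -> cj - ck != 0 ->
  (ci - cj) * uk * uij + (ck - ci) * uj * uik + (cj - ck) * ui * ujk = 0 ->
  uijk = 2^-1 * (uij * uik / ui + uij * ujk / uj + uik * ujk / uk) ->
  uiijk = 2^-1 * ((uiij*uik + uij*uiik)/ui - uij*uik*uii/ui^+2 + (uiij*ujk + uij*uijk)/uj
     - uij*ujk*uij/uj^+2 + (uiik*ujk + uik*uijk)/uk - uik*ujk*uik/uk^+2) ->
  uijjk = 2^-1 * ((uijj*uik + uij*uijk)/ui - uij*uik*uij/ui^+2 + (uijj*ujk + uij*ujjk)/uj
     - uij*ujk*ujj/uj^+2 + (uijk*ujk + uik*ujjk)/uk - uik*ujk*ujk/uk^+2) ->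
  (ci-cj)*(uik*uij + uk*uiij) + (ck-ci)*uij*uik + (cj-ck)*(uii*ujk + ui*uijk)
     + (ck-ci)*uj*uiik = 0 ->
  (ci-cj)*(ujk*uij + uk*uijj) + (ck-ci)*(ujj*uik + uj*uijk) + (cj-ck)*uij*ujk
     + (cj-ck)*ui*ujjk = 0 ->
  (ci-cj)*(uijk*uij + ujk*uiij + uik*uijj) + (ck-ci)*(uijj*uik + ujj*uiik + uij*uijk + uj*uiijk)
     + (cj-ck)*(uiij*ujk + uij*uijk) + (cj-ck)*(uii*ujjk + ui*uijjk) + (ci-cj)*uk*uiijj = 0 ->
  (2*uij*uiij/(ui^+2*uj) - uij^+2*(2*ui*uii*uj + ui^+2*uij)/(ui^+2*uj)^+2)
  + (2*uij*uijj/(ui*uj^+2) - uij^+2*(uij*uj^+2 + ui*2*uj*ujj)/(ui*uj^+2)^+2)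
  + (2*uiijj/(ui*uj) - 2*uijj*(uii*uj + ui*uij)/(ui*uj)^+2
     - (2*(uiij*(uij*uj+ui*ujj) + uij*(uiij*uj + uij*uij + uii*ujj + ui*uijj)) * (ui*uj)^+2
        - 2*uij*(uij*uj+ui*ujj)*2*(ui*uj)*(uii*uj+ui*uij))/((ui*uj)^+2)^+2) = 0.
Proof.
move=> ui0 uj0 uk0 cij0 cki0 cjk0 E1 E2 E2i E2j E1i E1j E1ij.
have a1 : (cj - ck) * ui != 0 by rewrite mulf_neq0.
have a2 : (ck - ci) * uj != 0 by rewrite mulf_neq0.
have a3 : (cj - ck) * ui != 0 by rewrite mulf_neq0.
have a4 : (ci - cj) * uk != 0 by rewrite mulf_neq0.
rewrite (lin_solve a4 E1ij) E2i E2j (lin_solve a2 E1i) (lin_solve a3 E1j) E2 (lin_solve a1 E1).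
by field; rewrite ui0 uj0 uk0 cij0 cjk0 cki0.
Qed.

Section PD.
Variables (R : realType) (n : nat).
Local Notation V := 'rV[R]_n.
Implicit Types (f g : V -> R) (x : V).

Lemma isdP f (i : 'I_n) x : differentiable f x ->
  is_derive x (ebasis i) (fun y => f y) (pd i f x).
Proof. exact: isdA. Qed.

Lemma isdN f x (v : V) df : is_derive x v f df -> is_derive x v (fun y => - f y) (- df).
Proof. move=> H; exact: is_deriveN. Qed.

Lemma pd_val f (i : 'I_n) x df : is_derive x (ebasis i) f df -> pd i f x = df.
Proof. by case. Qed.

Lemma zero_derive f (i : 'I_n) x df : (forall y, f y = 0) ->
  is_derive x (ebasis i) f df -> df = 0.
Proof.
move=> f0 [_ <-]; have -> : f = cst 0 by apply/funext => y; rewrite f0.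
exact: derive_cst.
Qed.

Lemma eq_derive f g (i : 'I_n) x df dg : (forall y, f y = g y) ->
  is_derive x (ebasis i) f df -> is_derive x (ebasis i) g dg -> df = dg.
Proof.
move=> fg [_ <-] [_ <-]; have -> : f = g by apply/funext.
by [].
Qed.

Lemma pds_cat (s t : seq 'I_n) f : pds s (pds t f) = pds (s ++ t) f.
Proof. by elim: s => //= a s ->. Qed.

Lemma swap g (a b : 'I_n) : (forall s y, differentiable (pds s g) y) ->
  pd a (pd b g) = pd b (pd a g).
Proof.
move=> hs; apply/funext => y.
exact: (@clairaut R V g y (ebasis b) (ebasis a) (hs [::]) (hs [:: b]) (hs [:: a])
  (hs [:: a; b]) (hs [:: b; a])).
Qed.

Lemma smooth_pds g (t : seq 'I_n) : (forall s y, differentiable (pds s g) y) ->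
  forall s y, differentiable (pds s (pds t g)) y.
Proof. by move=> hs s y; rewrite pds_cat. Qed.
End PD.

Lemma alg2 (R : realFieldType) (ci cj ck ui uj uk uii ujj uij uik ujk uiij uijj uiik ujjk
   uijk uiijk uijjk uiijj rij rijk riij riijk rijj rijjk X1 X2 X3 : R) :
  ui != 0 -> uj != 0 -> uk != 0 -> ci - cj != 0 -> ck - ci != 0 -> cj - ck != 0 ->
  rij = uij -> rijk = uijk -> riij = uiij -> riijk = uiijk -> rijj = uijj -> rijjk = uijjk ->
  (ci - cj) * uk * uij + (ck - ci) * uj * uik + (cj - ck) * ui * ujk = 0 ->
  uijk = 2^-1 * (uij * uik / ui + uij * ujk / uj + uik * ujk / uk) ->
  uiijk = 2^-1 * ((uiij*uik + uij*uiik)/ui - uij*uik*uii/ui^+2 + (uiij*ujk + uij*uijk)/uj - uij*ujk*uij/uj^+2 + (uiik*ujk + uik*uijk)/uk - uik*ujk*uik/uk^+2) ->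
  uijjk = 2^-1 * ((uijj*uik + uij*rijk)/ui - uij*uik*rij/ui^+2 + (uijj*ujk + uij*ujjk)/uj - uij*ujk*ujj/uj^+2 + (rijk*ujk + uik*ujjk)/uk - uik*ujk*ujk/uk^+2) ->
  (ci-cj)*(uik*uij + uk*uiij) + (ck-ci)*uij*uik + (cj-ck)*(uii*ujk + ui*uijk) + (ck-ci)*uj*uiik = 0 ->
  (ci-cj)*(ujk*uij + uk*uijj) + (ck-ci)*(ujj*uik + uj*rijk) + (cj-ck)*rij*ujk + (cj-ck)*ui*ujjk = 0 ->
  (ci-cj)*(uijk*uij + ujk*uiij + uik*uijj + uk*uiijj) + (ck-ci)*(rijj*uik + ujj*uiik + uij*rijk + uj*riijk) + (cj-ck)*(riij*ujk + rij*uijk) + (cj-ck)*(uii*ujjk + ui*rijjk) = 0 ->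
  X1 = 2*uij*uiij/(ui^+2*uj) - uij^+2*(2*ui*uii*uj + ui^+2*uij)/(ui^+2*uj)^+2 ->
  X2 = 2*uij*uijj/(ui*uj^+2) - uij^+2*(rij*uj^+2 + ui*2*uj*ujj)/(ui*uj^+2)^+2 ->
  X3 = 2*uiijj/(ui*uj) - 2*uijj*(uii*uj + ui*uij)/(ui*uj)^+2 - (2*(uiij*(rij*uj+ui*ujj) + uij*(riij*uj + rij*uij + uii*ujj + ui*rijj)) * (ui*uj)^+2 - 2*uij*(rij*uj+ui*ujj)*2*(ui*uj)*(uii*uj+ui*uij))/((ui*uj)^+2)^+2 ->
  X1 + X2 + X3 = 0.
Proof.
move=> ui0 uj0 uk0 cij0 cki0 cjk0 r1 r2 r3 r4 r5 r6 E1 E2 E2i E2j E1i E1j E1ij -> -> ->.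
subst rij rijk riij riijk rijj rijjk.
apply: (alg ui0 uj0 uk0 cij0 cki0 cjk0 E1 E2 E2i E2j E1i E1j).
by rewrite -E1ij; ring.
Qed.

Lemma isdP2 (R : realType) (n : nat) (f : 'rV[R]_n -> R) (i : 'I_n) (x : 'rV[R]_n) :
  differentiable f x -> is_derive x (ebasis i) f (pd i f x).
Proof. exact: isdA. Qed.

Ltac tolist F := lazymatch F with
  | pd ?a ?G => let s := tolist G in open_constr:(a :: s)
  | _ => open_constr:(@nil _) end.
Ltac dif hs := lazymatch goal with |- differentiable ?F ?y =>
  let s := tolist F in exact (hs s y) end.
Ltac nzt hu := repeat lazymatch goal with
  | |- is_true (_ * _ != 0) => apply: mulf_neq0
  | |- is_true (_ ^+ _ != 0) => apply: expf_neq0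
  | |- is_true (pd _ _ _ != 0) => apply: hu end.
Ltac dstep hs hu := lazymatch goal with
  | |- is_derive _ _ (fun _ => ?c) _ => eapply isdC
  | |- is_derive _ _ (fun y => pd _ _ y) _ => eapply isdP; dif hs
  | |- is_derive _ _ (pd _ _) _ => eapply isdP2; dif hs
  | |- is_derive _ _ (fun y => _ - _) _ => eapply isdB
  | |- is_derive _ _ (fun y => _ + _) _ => eapply isdD
  | |- is_derive _ _ (fun y => - _) _ => eapply isdN
  | |- is_derive _ _ (fun y => _ ^+ 2) _ => eapply isdX2
  | |- is_derive _ _ (fun y => _ * _) _ => eapply isdM
  | |- is_derive _ _ (fun y => _^-1) _ => eapply isdV; [cbv beta; nzt hu | ]
  end.
Ltac dfull hs hu := repeat (dstep hs hu).
Ltac genpd := repeat match goal with |- context [pd ?a ?f ?y] => generalize (pd a f y); intro end.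
Ltac ffin hu i j k y := move: (hu i y) (hu j y) (hu k y); cbv beta; genpd; intros;
  field; repeat (apply/andP; split); assumption.
Ltac rfin y := cbv beta; genpd; intros; ring.

Theorem lemmaA2 (R : realType) (n : nat) (c : 'I_n -> R) (u : 'rV[R]_n -> R) :
  (3 <= n)%N ->
  injective c ->
  smooth u ->
  (forall (i : 'I_n) (x : 'rV[R]_n), pd i u x != 0) ->
  (forall (i j k : 'I_n), i != j -> i != k -> j != k -> forall x : 'rV[R]_n,
     (c i - c j) * pd k u x * pds [:: i; j] u x
   + (c k - c i) * pd j u x * pds [:: i; k] u x
   + (c j - c k) * pd i u x * pds [:: j; k] u x = 0) ->
  (forall (i j k : 'I_n), i != j -> i != k -> j != k -> forall x : 'rV[R]_n,
     pds [:: i; j; k] u x =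
       2^-1 * (pds [:: i; j] u x * pds [:: i; k] u x / pd i u x
             + pds [:: i; j] u x * pds [:: j; k] u x / pd j u x
             + pds [:: i; k] u x * pds [:: j; k] u x / pd k u x)) ->
  forall (i j : 'I_n), i != j -> forall x : 'rV[R]_n,
    pd i (fun y => pds [:: i; j] u y ^+ 2 / (pd i u y ^+ 2 * pd j u y)) x
  + pd j (fun y => pds [:: i; j] u y ^+ 2 / (pd i u y * pd j u y ^+ 2)) x
  + pds [:: i; j] (fun y => 2 * pds [:: i; j] u y / (pd i u y * pd j u y)) x
  = 0.

Proof.
move=> n3 hc hs hu hE1 hE2 i j hij x.
cbn [pds] in *.
have [k /andP[hki hkj]] : exists k : 'I_n, (k != i) && (k != j).
  have o0 : (0 < n)%N by lia.
  have o1 : (1 < n)%N by lia.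
  have o2 : (2 < n)%N by lia.
  case: (boolP ((Ordinal o0 != i) && (Ordinal o0 != j))) => Ha; first by exists (Ordinal o0).
  case: (boolP ((Ordinal o1 != i) && (Ordinal o1 != j))) => Hb; first by exists (Ordinal o1).
  exists (Ordinal o2); move: Ha Hb; rewrite -!val_eqE /=.
  move: hij; rewrite -val_eqE; lia.
have hik : i != k by rewrite eq_sym.
have hjk : j != k by rewrite eq_sym.
have cij : c i - c j != 0 by rewrite subr_eq0 (inj_eq hc).
have cki : c k - c i != 0 by rewrite subr_eq0 (inj_eq hc).
have cjk : c j - c k != 0 by rewrite subr_eq0 (inj_eq hc).
have C1 : pd j (pd i u) = pd i (pd j u) by apply: swap.
have C2 : pd j (pd i (pd k u)) = pd i (pd j (pd k u)).
  by apply: swap; apply: (@smooth_pds _ _ u [:: k]).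
have C3 : pd i (pd j (pd j u)) = pd j (pd i (pd j u)).
  by apply: swap; apply: (@smooth_pds _ _ u [:: j]).
have C5 : pd i (pd j (pd j (pd k u))) = pd j (pd i (pd j (pd k u))).
  by apply: swap; apply: (@smooth_pds _ _ u [:: j; k]).
have R1 : pd j (pd i u) x = pd i (pd j u) x := f_equal (fun g => g x) C1.
have R2 : pd j (pd i (pd k u)) x = pd i (pd j (pd k u)) x := f_equal (fun g => g x) C2.
have R3 : pd i (pd j (pd i u)) x = pd i (pd i (pd j u)) x := f_equal (fun g => pd i g x) C1.
have R4 : pd i (pd j (pd i (pd k u))) x = pd i (pd i (pd j (pd k u))) x :=
  f_equal (fun g => pd i g x) C2.
have R5 : pd i (pd j (pd j u)) x = pd j (pd i (pd j u)) x := f_equal (fun g => g x) C3.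
have R6 : pd i (pd j (pd j (pd k u))) x = pd j (pd i (pd j (pd k u))) x :=
  f_equal (fun g => g x) C5.
have hE1' := hE1 i j k hij hik hjk.
have hE2' := hE2 i j k hij hik hjk.
have dE1i : forall y, (c i-c j)*((pd i (pd k u) y)*(pd i (pd j u) y) + (pd k u y)*(pd i (pd i (pd j u)) y)) + (c k-c i)*(pd i (pd j u) y)*(pd i (pd k u) y) + (c j-c k)*((pd i (pd i u) y)*(pd j (pd k u) y) + (pd i u y)*(pd i (pd j (pd k u)) y)) + (c k-c i)*(pd j u y)*(pd i (pd i (pd k u)) y) = 0.
  move=> y; apply: (@zero_derive R n _ i y _ hE1'); apply: is_derive_eq.
    by dfull hs hu.
  by rfin y.
have dE1j : forall y, (c i-c j)*((pd j (pd k u) y)*(pd i (pd j u) y) + (pd k u y)*(pd j (pd i (pd j u)) y)) + (c k-c i)*((pd j (pd j u) y)*(pd i (pd k u) y) + (pd j u y)*(pd j (pd i (pd k u)) y)) + (c j-c k)*(pd j (pd i u) y)*(pd j (pd k u) y) + (c j-c k)*(pd i u y)*(pd j (pd j (pd k u)) y) = 0.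
  move=> y; apply: (@zero_derive R n _ j y _ hE1'); apply: is_derive_eq.
    by dfull hs hu.
  by rfin y.
have dE1ij : (c i-c j)*((pd i (pd j (pd k u)) x)*(pd i (pd j u) x) + (pd j (pd k u) x)*(pd i (pd i (pd j u)) x) + (pd i (pd k u) x)*(pd j (pd i (pd j u)) x) + (pd k u x)*(pd i (pd j (pd i (pd j u))) x)) + (c k-c i)*((pd i (pd j (pd j u)) x)*(pd i (pd k u) x) + (pd j (pd j u) x)*(pd i (pd i (pd k u)) x) + (pd i (pd j u) x)*(pd j (pd i (pd k u)) x) + (pd j u x)*(pd i (pd j (pd i (pd k u))) x)) + (c j-c k)*((pd i (pd j (pd i u)) x)*(pd j (pd k u) x) + (pd j (pd i u) x)*(pd i (pd j (pd k u)) x)) + (c j-c k)*((pd i (pd i u) x)*(pd j (pd j (pd k u)) x) + (pd i u x)*(pd i (pd j (pd j (pd k u))) x)) = 0.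
  apply: (@zero_derive R n _ i x _ dE1j); apply: is_derive_eq.
    by dfull hs hu.
  by rfin x.
have dE2i : pd i (pd i (pd j (pd k u))) x = 2^-1 * (((pd i (pd i (pd j u)) x)*(pd i (pd k u) x) + (pd i (pd j u) x)*(pd i (pd i (pd k u)) x))/(pd i u x) - (pd i (pd j u) x)*(pd i (pd k u) x)*(pd i (pd i u) x)/(pd i u x)^+2 + ((pd i (pd i (pd j u)) x)*(pd j (pd k u) x) + (pd i (pd j u) x)*(pd i (pd j (pd k u)) x))/(pd j u x) - (pd i (pd j u) x)*(pd j (pd k u) x)*(pd i (pd j u) x)/(pd j u x)^+2 + ((pd i (pd i (pd k u)) x)*(pd j (pd k u) x) + (pd i (pd k u) x)*(pd i (pd j (pd k u)) x))/(pd k u x) - (pd i (pd k u) x)*(pd j (pd k u) x)*(pd i (pd k u) x)/(pd k u x)^+2).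
  apply: (@eq_derive R n _ _ i x _ _ hE2').
    by dfull hs hu.
  apply: is_derive_eq.
    by dfull hs hu.
  by ffin hu i j k x.
have dE2j : pd j (pd i (pd j (pd k u))) x = 2^-1 * (((pd j (pd i (pd j u)) x)*(pd i (pd k u) x) + (pd i (pd j u) x)*(pd j (pd i (pd k u)) x))/(pd i u x) - (pd i (pd j u) x)*(pd i (pd k u) x)*(pd j (pd i u) x)/(pd i u x)^+2 + ((pd j (pd i (pd j u)) x)*(pd j (pd k u) x) + (pd i (pd j u) x)*(pd j (pd j (pd k u)) x))/(pd j u x) - (pd i (pd j u) x)*(pd j (pd k u) x)*(pd j (pd j u) x)/(pd j u x)^+2 + ((pd j (pd i (pd k u)) x)*(pd j (pd k u) x) + (pd i (pd k u) x)*(pd j (pd j (pd k u)) x))/(pd k u x) - (pd i (pd k u) x)*(pd j (pd k u) x)*(pd j (pd k u) x)/(pd k u x)^+2).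
  apply: (@eq_derive R n _ _ j x _ _ hE2').
    by dfull hs hu.
  apply: is_derive_eq.
    by dfull hs hu.
  by ffin hu i j k x.
have T1 : pd i (fun y => pd i (pd j u) y ^+ 2 / (pd i u y ^+ 2 * pd j u y)) x = 2*(pd i (pd j u) x)*(pd i (pd i (pd j u)) x)/((pd i u x)^+2*(pd j u x)) - (pd i (pd j u) x)^+2*(2*(pd i u x)*(pd i (pd i u) x)*(pd j u x) + (pd i u x)^+2*(pd i (pd j u) x))/((pd i u x)^+2*(pd j u x))^+2.
  apply: pd_val; apply: is_derive_eq.
    by dfull hs hu.
  by ffin hu i j k x.
have T2 : pd j (fun y => pd i (pd j u) y ^+ 2 / (pd i u y * pd j u y ^+ 2)) x = 2*(pd i (pd j u) x)*(pd j (pd i (pd j u)) x)/((pd i u x)*(pd j u x)^+2) - (pd i (pd j u) x)^+2*((pd j (pd i u) x)*(pd j u x)^+2 + (pd i u x)*2*(pd j u x)*(pd j (pd j u) x))/((pd i u x)*(pd j u x)^+2)^+2.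
  apply: pd_val; apply: is_derive_eq.
    by dfull hs hu.
  by ffin hu i j k x.
have INf : pd j (fun y => 2 * pd i (pd j u) y / (pd i u y * pd j u y)) = (fun y => 2*(pd j (pd i (pd j u)) y)/((pd i u y)*(pd j u y)) - 2*(pd i (pd j u) y)*((pd j (pd i u) y)*(pd j u y) + (pd i u y)*(pd j (pd j u) y))/((pd i u y)*(pd j u y))^+2).
  apply/funext => y; apply: pd_val; apply: is_derive_eq.
    by dfull hs hu.
  by ffin hu i j k y.
have T3 : pd i (fun y => 2*(pd j (pd i (pd j u)) y)/((pd i u y)*(pd j u y)) - 2*(pd i (pd j u) y)*((pd j (pd i u) y)*(pd j u y) + (pd i u y)*(pd j (pd j u) y))/((pd i u y)*(pd j u y))^+2) x = 2*(pd i (pd j (pd i (pd j u))) x)/((pd i u x)*(pd j u x)) - 2*(pd j (pd i (pd j u)) x)*((pd i (pd i u) x)*(pd j u x) + (pd i u x)*(pd i (pd j u) x))/((pd i u x)*(pd j u x))^+2 - (2*((pd i (pd i (pd j u)) x)*((pd j (pd i u) x)*(pd j u x)+(pd i u x)*(pd j (pd j u) x)) + (pd i (pd j u) x)*((pd i (pd j (pd i u)) x)*(pd j u x) + (pd j (pd i u) x)*(pd i (pd j u) x) + (pd i (pd i u) x)*(pd j (pd j u) x) + (pd i u x)*(pd i (pd j (pd j u)) x))) * ((pd i u x)*(pd j u x))^+2 - 2*(pd i (pd j u) x)*((pd j (pd i u) x)*(pd j u x)+(pd i u x)*(pd j (pd j u) x))*2*((pd i u x)*(pd j u x))*((pd i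 (pd i u) x)*(pd j u x)+(pd i u x)*(pd i (pd j u) x)))/(((pd i u x)*(pd j u x))^+2)^+2.
  apply: pd_val; apply: is_derive_eq.
    by dfull hs hu.
  by ffin hu i j k x.
have T3' := etrans (f_equal (fun g => pd i g x) INf) T3.
exact: (alg2 (hu i x) (hu j x) (hu k x) cij cki cjk R1 R2 R3 R4 R5 R6 (hE1' x) (hE2' x)
  dE2i dE2j (dE1i x) (dE1j x) dE1ij T1 T2 T3').
Qed.
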